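(* Under the standing assumption, no two distinct small tiles touch, i.e. any two distinct small tiles are disjoint.
   Context: Standing assumption: let $n\ge 2$ and $0<p<q$ be real numbers. A tiling of $\mathbb{R}^n$ is a family of closed sets (tiles) whose union is $\mathbb{R}^n$ and whose pairwise intersections have Lebesgue measure zero. There are an invertible real $n\times n$ matrix $B$, an axis-parallel closed cube $S_0$ of side length $p$ and an axis-parallel closed cube $T_0$ of side length $q$ such that the family $\{S_0+Bz: z\in\mathbb{Z}^n\}\cup\{T_0+Bz: z\in\mathbb{Z}^n\}$ is a tiling of $\mathbb{R}^n$, and this tiling is unilateral, i.e. no two distinct tiles of the same side length share a full facet. Tiles of side length $p$ are called small, tiles of side length $q$ big. Two tiles touch if they intersect; they properly touch if their intersection has positive $(n-1)$-dimensional Lebesgue measure. *)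

(* Defs.v *)
From HB Require Import structures.
From mathcomp Require Import all_boot all_order all_algebra.
From mathcomp Require Import boolp classical_sets reals.
Set Implicit Arguments. Unset Strict Implicit. Unset Printing Implicit Defensive.
Import Order.TTheory GRing.Theory Num.Theory.
Local Open Scope ring_scope.
Local Open Scope classical_set_scope.

(* Points of R^n are column vectors 'cV[R]_n; coordinate i of x is x i 0. *)

Definition cube (R : realType) (n : nat) (c : 'cV[R]_n) (s : R) : set 'cV[R]_n :=
  [set x | forall i : 'I_n, c i 0 <= x i 0 <= c i 0 + s].

Definition box (R : realType) (n : nat) (l u : 'cV[R]_n) : set 'cV[R]_n :=
  [set x | forall i : 'I_n, l i 0 <= x i 0 <= u i 0].

Definition box_vol (R : realType) (n : nat) (l u : 'cV[R]_n) : R :=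
  \prod_(i < n) (u i 0 - l i 0).

Definition null_set (R : realType) (n : nat) (A : set 'cV[R]_n) : Prop :=
  forall e : R, 0 < e ->
    exists (l u : nat -> 'cV[R]_n),
      (forall k i, l k i 0 <= u k i 0) /\
      (A `<=` \bigcup_k box (l k) (u k)) /\
      (forall N : nat, \sum_(k < N) box_vol (l k) (u k) < e).

Definition is_tiling (R : realType) (n : nat) (I : Type) (tile : I -> set 'cV[R]_n) :=
  (forall x : 'cV[R]_n, exists i, tile i x) /\
  (forall i j, tile i <> tile j -> null_set (tile i `&` tile j)).

Definition facet (R : realType) (n : nat) (c : 'cV[R]_n) (s : R) (k : 'I_n) (b : bool)
  : set 'cV[R]_n :=
  [set x | cube c s x /\ x k 0 = c k 0 + (if b then s else 0)].

Definition share_facet (R : realType) (n : nat) (c1 c2 : 'cV[R]_n) (s : R) : Prop :=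
  exists k1 b1 k2 b2, facet c1 s k1 b1 = facet c2 s k2 b2.

Definition latt (R : realType) (n : nat) (B : 'M[R]_n) (z : 'cV[int]_n) : 'cV[R]_n :=
  B *m map_mx (fun m : int => m%:~R) z.

(* The two-cube lattice family: index (false, z) is the small tile S0 + Bz,
   (true, z) the big tile T0 + Bz; cS, cT are the lower corners of S0, T0. *)
Definition tcorner (R : realType) (n : nat) (B : 'M[R]_n) (cS cT : 'cV[R]_n)
  (t : bool * 'cV[int]_n) : 'cV[R]_n :=
  (if t.1 then cT else cS) + latt B t.2.

Definition tside (R : realType) (n : nat) (p q : R) (t : bool * 'cV[int]_n) : R :=
  if t.1 then q else p.

Definition ttile (R : realType) (n : nat) (B : 'M[R]_n) (cS cT : 'cV[R]_n) (p q : R)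
  (t : bool * 'cV[int]_n) : set 'cV[R]_n :=
  cube (tcorner B cS cT t) (@tside _ n p q t).

Definition unilateral (R : realType) (n : nat) (B : 'M[R]_n) (cS cT : 'cV[R]_n) (p q : R) :=
  forall t1 t2 : bool * 'cV[int]_n,
    ttile B cS cT p q t1 <> ttile B cS cT p q t2 ->
    @tside _ n p q t1 = @tside _ n p q t2 ->
    ~ share_facet (tcorner B cS cT t1) (tcorner B cS cT t2) (@tside _ n p q t1).

(* Main.v *)
Set Warnings "-all".
From HB Require Import structures.
From mathcomp Require Import all_boot all_order all_algebra.
From mathcomp Require Import all_classical all_reals all_analysis.
From mathcomp Require Import measurable_realfun lebesgue_measure lebesgue_integral.
From mathcomp Require Import lra.
Require Import Defs.
Import Order.TTheory GRing.Theory Num.Theory.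
Local Open Scope ring_scope.
Local Open Scope classical_set_scope.

Lemma key (R : realType) (a b V : R) (c l u : nat -> R) :
  (forall k, 0 <= c k) -> a <= b -> (forall k, l k <= u k) -> 0 <= V ->
  (forall t, a <= t <= b ->
     (V%:E <= \sum_(k <oo) (c k * \1_(`[l k, u k]) t)%:E)%E) ->
  ((V * (b - a))%:E <= \sum_(k <oo) (c k * (u k - l k))%:E)%E.
Proof.
move=> c0 ab lu V0 H.
pose mu := (@lebesgue_measure R).
pose D : set R := `[a, b].
have mD : measurable D by exact: measurable_itv.
pose f := fun k (t : R) => (c k * \1_(`[l k, u k]) t)%:E.
have f0 : forall k t, (0 <= f k t)%E.
  by move=> k t; rewrite lee_fin mulr_ge0 // indicE; case: (t \in _).
have mf : forall k, measurable_fun D (f k).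
  move=> k; apply/measurable_EFinP; apply: measurable_funM => //.
have -> : ((V * (b - a))%:E = \int[mu]_(t in D) (cst V%:E) t)%E.
  rewrite integral_cst // /mu /D. have /= := @lebesgue_measure_itv R `[a, b]%R. move=> ->. rewrite lte_fin.
  case: ltP => [_|ba]; first by rewrite -EFinD -EFinM.
  have eba : b = a by apply/eqP; rewrite eq_le ab ba.
  by rewrite eba subrr mulr0 mule0.

apply: (@le_trans _ _ (\int[mu]_(t in D) \sum_(k <oo) f k t)%E).
  have mS : measurable_fun D (fun t => \sum_(k <oo) f k t)%E.
    exact: (@ge0_emeasurable_sum _ _ R D f xpredT (fun k x _ _ => f0 k x) (fun k _ => mf k)).
  apply: (@ge0_le_integral _ _ R mu D mD (fun t => cst V%:E t) _ _ _ mS).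
  - by move=> t _; rewrite lee_fin.
  - exact: measurable_cst.
  - move=> t; rewrite /D /= in_itv /= => Dt; exact: H.
rewrite integral_nneseries //; apply: lee_nneseries => //.
  by move=> k _ _; apply: integral_ge0 => t _.
move=> k _; rewrite /f.
rewrite (@integralZl_indic _ _ _ mu D mD (fun _ => `[l k, u k]%classic) (c k)) //; last first.
  by move=> ck; have := c0 k; rewrite leNgt ck.
rewrite integral_indic //.
rewrite EFinM; apply: lee_wpmul2l; first by rewrite lee_fin.
have mI := @measureIl _ _ R mu `[l k, u k]%classic D (measurable_itv _) mD. apply: (le_trans mI).
have /= := @lebesgue_measure_itv R `[l k, u k]%R; rewrite /mu => ->.
rewrite lte_fin; case: ltP => [_|ul]; first by rewrite -EFinD.
by rewrite lee_fin subr_ge0.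
Qed.

Lemma in_itvcc (R : realType) (t l u : R) : (t \in (`[l, u] : set R)) = (l <= t <= u).
Proof.
apply/idP/idP => [/set_mem /=|h]; first by rewrite in_itv.
by apply/mem_set; rewrite /= in_itv.
Qed.

Lemma cover_vol (R : realType) (d : nat) : forall (a b : nat -> R) (l u : nat -> nat -> R) (w : nat -> bool),
  (forall i, (i < d)%N -> a i <= b i) ->
  (forall k i, (i < d)%N -> l k i <= u k i) ->
  (forall x : nat -> R, (forall i, (i < d)%N -> a i <= x i <= b i) ->
     exists k, w k /\ forall i, (i < d)%N -> l k i <= x i <= u k i) ->
  ((\prod_(i < d) (b i - a i))%:E <=
     \sum_(k <oo) ((w k)%:R * \prod_(i < d) (u k i - l k i))%:E)%E.
Proof.
elim: d => [|d IH] a b l u w ab lu cov.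
  rewrite big_ord0.
  have [k [wk _]] := cov (fun _ => 0) (fun i (hi : (i < 0)%N) => False_ind _ (notF hi)).
  apply: (le_trans _ (nneseries_lim_ge k.+1 _)); last first.
    by move=> n _ _; rewrite lee_fin mulr_ge0 ?ler0n // prodr_ge0 // => i _; rewrite subr_ge0 lu.
  rewrite big_nat_recr //= wk big_ord0 mulr1.
  apply: leeDr; apply: sume_ge0 => n _.
  by rewrite lee_fin mulr_ge0 ?ler0n // prodr_ge0 // => i _; rewrite subr_ge0 lu.
rewrite big_ord_recr /=.
under eq_eseriesr do rewrite big_ord_recr /= mulrA.
apply: key.
- move=> k; rewrite mulr_ge0 ?ler0n // prodr_ge0 // => i _; rewrite subr_ge0 lu //.
  exact: (@leq_trans d).
- exact: ab.
- by move=> k; exact: lu.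
- by rewrite prodr_ge0 // => i _; rewrite subr_ge0 ab // (@leq_trans d).
move=> t /andP [hat htb].
have := IH a b l u (fun k => w k && (l k d <= t <= u k d)).
have -> : (\sum_(k <oo) ((w k && (l k d <= t <= u k d))%:R * \prod_(i < d) (u k i - l k i))%:E
   = \sum_(k <oo) ((w k)%:R * \prod_(i < d) (u k i - l k i) * \1_(`[l k d, u k d]) t)%:E)%E.
  apply: eq_eseriesr => k _; rewrite indicE in_itvcc.
  by case: (w k); case: (l k d <= t <= u k d); rewrite /= ?mul0r ?mulr0 ?mulr1 ?mul1r.
apply.
- by move=> i id; apply: ab; rewrite (@leq_trans d).
- by move=> k i id; apply: lu; rewrite (@leq_trans d).
move=> x hx.
pose x' := fun i => if i == d then t else x i.
have hx' : forall i, (i < d.+1)%N -> a i <= x' i <= b i.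
  move=> i; rewrite ltnS leq_eqVlt; case/orP => [/eqP->|id].
    by rewrite /x' eqxx hat htb.
  by rewrite /x' (ltn_eqF id); exact: hx.
have [k [wk hk]] := cov x' hx'.
exists k; split.
  by rewrite wk /=; have := hk d (ltnSn d); rewrite /x' eqxx.
move=> i id; have := hk i (@leq_trans d _ _ id (leqnSn d)).
by rewrite /x' (ltn_eqF id).
Qed.

Lemma cube_inj (R : realType) (n : nat) (c1 c2 : 'cV[R]_n) (s : R) :
  0 <= s -> cube c1 s = cube c2 s -> c1 = c2.
Proof.
move=> s0 E.
have h1 : cube c2 s c1 by rewrite -E => i; rewrite lexx /= lerDl.
have h2 : cube c1 s c2 by rewrite E => i; rewrite lexx /= lerDl.
apply/matrixP => i j; rewrite (ord1 j).
have := h1 i; have := h2 i; case/andP => a1 _; case/andP => a2 _.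
by apply/eqP; rewrite eq_le a1 a2.
Qed.

Lemma series_le (R : realType) (F : nat -> R) (e : R) :
  (forall k, 0 <= F k) -> (forall N, \sum_(k < N) F k < e) ->
  (\sum_(k <oo) (F k)%:E <= e%:E)%E.
Proof.
move=> F0 H; apply: lime_le.
  by apply: is_cvg_nneseries => k _ _; rewrite lee_fin.
apply: nearW => N; rewrite sumEFin lee_fin big_mkord; exact/ltW.
Qed.

Theorem lemma3 (R : realType) (n : nat) (p q : R) (B : 'M[R]_n) (cS cT : 'cV[R]_n) :
  (2 <= n)%N -> 0 < p -> p < q -> B \in unitmx ->
  is_tiling (ttile B cS cT p q) ->
  unilateral B cS cT p q ->
  forall z1 z2 : 'cV[int]_n,
    cube (cS + latt B z1) p <> cube (cS + latt B z2) p ->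
    cube (cS + latt B z1) p `&` cube (cS + latt B z2) p = set0.
Proof.
move: B cS cT; case: n => [|m] B cS cT n2 //.
move=> p0 pq _ [_ Hnull] _ z1 z2 Hne.
rewrite -subset0 => y [hy1 hy2].
pose L1 := latt B z1; pose L2 := latt B z2.
have Hne' : ttile B cS cT p q (true, z1) <> ttile B cS cT p q (true, z2).
  rewrite /ttile /tcorner /tside /= => E; apply: Hne.
  have := @cube_inj _ _ _ _ _ (ltW (lt_trans p0 pq)) E => /addrI ->; done.
have Hn := Hnull _ _ Hne'.
rewrite /ttile /tcorner /tside /= in Hn.
have Dp : forall i : 'I_m.+1, L1 i 0 - L2 i 0 <= p /\ L2 i 0 - L1 i 0 <= p.
  move=> i; have := hy1 i; have := hy2 i; rewrite !mxE.
  case/andP => a1 b1; case/andP => a2 b2; split; lra.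
pose mlow := fun i : 'I_m.+1 => if L1 i 0 <= L2 i 0 then cT i 0 + L2 i 0 else cT i 0 + L1 i 0.
pose mup := fun i : 'I_m.+1 => if L1 i 0 <= L2 i 0 then cT i 0 + L1 i 0 + q else cT i 0 + L2 i 0 + q.
have gap : forall i, q - p <= mup i - mlow i.
  move=> i; have [d1 d2] := Dp i; rewrite /mup /mlow; case: ifP => _; lra.
have inbox : forall x : 'cV[R]_m.+1, (forall i, mlow i <= x i 0 <= mup i) ->
    (cube (cT + L1) q `&` cube (cT + L2) q) x.
  move=> x hx; split => i; have := hx i; rewrite /mlow /mup !mxE;
    case: ifP => h /andP [h1 h2]; apply/andP; split; lra.
pose V := \prod_(i < m.+1) (mup i - mlow i).
have V0 : 0 < V by apply: prodr_gt0 => i _; have := gap i; lra.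
have [l [u [lu [cov sm]]]] := Hn (V / 2) ltac:(lra).
have := @cover_vol R m.+1 (fun j => mlow (inord j)) (fun j => mup (inord j))
  (fun k j => l k (inord j) 0) (fun k j => u k (inord j) 0) (fun _ => true).
rewrite /=.
have -> : \prod_(i < m.+1) (mup (inord i) - mlow (inord i)) = V.
  by apply: eq_bigr => i _; rewrite inord_val.
have -> : (\sum_(k <oo) (1 * \prod_(i < m.+1) (u k (inord i) 0 - l k (inord i) 0))%:E
   = \sum_(k <oo) (box_vol (l k) (u k))%:E)%E.
  apply: eq_eseriesr => k _; rewrite mul1r /box_vol; congr (_%:E).
  by apply: eq_bigr => i _; rewrite inord_val.
move=> H.
have F0 : forall k, 0 <= box_vol (l k) (u k).
  by move=> k; rewrite /box_vol prodr_ge0 // => i _; rewrite subr_ge0.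
have Hs := @series_le R (fun k => box_vol (l k) (u k)) (V/2) F0 sm.
have Hc : (V%:E <= \sum_(k <oo) (box_vol (l k) (u k))%:E)%E.
  apply: H.
  + move=> i _; have := gap (inord i); lra.
  + by move=> k i _; exact: lu.
  + move=> x hx.
    pose y0 := \col_(i < m.+1) x i.
    have : (cube (cT + L1) q `&` cube (cT + L2) q) y0.
      apply: inbox => i; rewrite mxE; have := hx i (ltn_ord i); rewrite inord_val; done.
    move/cov => [k _ hk]; exists k; split => // i hi.
    have := hk (inord i); rewrite mxE inordK //.
have := le_trans Hc Hs; rewrite lee_fin => ?; lra.
Qed.
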